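(* Let $H=(\mathcal{V},\mathcal{I})$ be a proper interval hypergraph. Then $H$ is exactly hittable.
   Context: An interval hypergraph has vertex set $[n]=\{1,\dots,n\}$ and hyperedges that are nonempty sets of consecutive integers. It is proper if no interval is properly contained in another. It is exactly hittable if there is $S\subseteq\mathcal{V}$ with $|S\cap I|=1$ for every $I\in\mathcal{I}$. *)

(* Defs.v *)
(* Vertex set [n] = {1,...,n} is represented by 'I_n
   (vertex i+1 of the paper is the ordinal i); the shift preserves
   consecutiveness. *)
From mathcomp Require Import all_boot.
Set Implicit Arguments. Unset Strict Implicit. Unset Printing Implicit Defensive.

Definition is_interval (n : nat) (I : {set 'I_n}) : Prop :=
  I != set0 /\
  forall i j k : 'I_n, i \in I -> k \in I -> i <= j -> j <= k -> j \in I.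

Definition interval_hypergraph (n : nat) (E : {set {set 'I_n}}) : Prop :=
  forall I, I \in E -> is_interval I.

Definition proper_hypergraph (n : nat) (E : {set {set 'I_n}}) : Prop :=
  forall I J, I \in E -> J \in E -> ~~ (I \proper J).

Definition exactly_hittable (n : nat) (E : {set {set 'I_n}}) : Prop :=
  exists S : {set 'I_n}, forall I, I \in E -> #|S :&: I| = 1.

(* Main.v *)
Require Import Defs.
From mathcomp Require Import all_boot.
From Stdlib Require Import Classical.

Lemma build n (E : {set {set 'I_n}}) (HE : interval_hypergraph E) :
  forall k, k <= n -> exists S : {set 'I_n},
  [/\ forall x, x \in S -> x < k,
      forall J, J \in E -> (forall y, y \in J -> y < k) -> exists y, y \in S :&: J
    & forall x, x \in S -> exists2 J, J \in E &
        [/\ x \in J, forall y, y \in J -> y <= x & forall y, y \in S -> y \in J -> x <= y]].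
Proof.
elim=> [|k IH] Hk.
  exists set0; split.
  - by move=> x; rewrite in_set0.
  - move=> J /HE [/set0Pn [y Hy] _] H; by have := H y Hy.
  - by move=> x; rewrite in_set0.
have Hk' : k <= n by apply: ltnW.
have [S [S1 S2 S3]] := IH Hk'.
pose o := Ordinal Hk.
have lt_other : forall J : {set 'I_n}, (forall y, y \in J -> y < k.+1) -> o \notin J ->
   forall y, y \in J -> y < k.
  move=> J HJ Ho y Hy; have := HJ y Hy; rewrite ltnS leq_eqVlt => /orP [/eqP e|//].
  by exfalso; move/negP: Ho; apply; have -> : o = y by apply: val_inj => /=; rewrite e.
case: (classic (exists2 J, J \in E & [/\ o \in J, forall y, y \in J -> y <= k
          & forall y, y \in S -> y \notin J])).
- move=> [J0 HJ0 [Ho0 Hm0 Hs0]].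
  exists (o |: S); split.
  + move=> x; rewrite in_setU1 => /orP [/eqP -> //|/S1 h]; exact: ltnW.
  + move=> J HJ Hlt; case: (boolP (o \in J)) => Ho.
      by exists o; rewrite inE in_setU1 eqxx Ho.
    have [y Hy] := S2 J HJ (lt_other J Hlt Ho).
    exists y; move: Hy; rewrite !inE => /andP [-> ->]; by rewrite orbT.
  + move=> x; rewrite in_setU1 => /orP [/eqP ->|Hx].
      exists J0 => //; split => // y; rewrite in_setU1 => /orP [/eqP -> //|Hy].
      by move=> Hy'; have := Hs0 y Hy; rewrite Hy'.
    have [J HJ [Hx1 Hx2 Hx3]] := S3 x Hx.
    exists J => //; split => // y; rewrite in_setU1 => /orP [/eqP -> _|Hy].
      by apply: ltnW; apply: S1.
    exact: Hx3.
- move=> Hno; exists S; split.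
  + by move=> x /S1 h; apply: ltnW.
  + move=> J HJ Hlt; case: (boolP (o \in J)) => Ho.
      apply: NNPP => Hne; apply: Hno; exists J => //; split => //.
      move=> y Hy; apply/negP => Hy'; apply: Hne; exists y; by rewrite inE Hy Hy'.
    exact: S2 J HJ (lt_other J Hlt Ho).
  + exact: S3.
Qed.

Theorem lemma9 (n : nat) (E : {set {set 'I_n}}) :
  interval_hypergraph E -> proper_hypergraph E -> exactly_hittable E.
Proof.
move=> HE HP.
have [S [_ S2 S3]] := @build n E HE n (leqnn n).
exists S => I HI.
have [y Hy] := S2 I HI (fun y _ => ltn_ord y).
have key : forall p q : 'I_n, p \in S :&: I -> q \in S :&: I -> p < q -> False.
  move=> p q; rewrite !inE => /andP [Sp Ip] /andP [Sq Iq] pq.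
  have [J HJ [Jq Jm Js]] := S3 q Sq.
  have pJ : p \notin J.
    by apply/negP => pJ; have := Js p Sp pJ; rewrite leqNgt pq.
  have := HP J I HJ HI; rewrite properE; apply/negP/negPn/andP; split.
    apply/subsetP => z zJ.
    have pz : p < z.
      rewrite ltnNge; apply/negP => zp.
      move/negP: pJ; apply; have [_ Hint] := HE J HJ.
      by apply: (Hint z p q) => //; apply: ltnW.
    have [_ Hint] := HE I HI.
    by apply: (Hint p z q) => //; [apply: ltnW | apply: Jm].
  by apply/subsetPn; exists p.
have -> : S :&: I = [set y].
  apply/setP => z; rewrite in_set1; apply/idP/eqP => [Hz|->//].
  case: (ltngtP z y) => h.
  - by exfalso; apply: (key z y).
  - by exfalso; apply: (key y z).
  - exact: val_inj.
by rewrite cards1.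
Qed.
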